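(* For a barcode $f$, the lifespan series $L(f)$, and hence all $L(f^{\wedge p})$ for $p \ge 1$, can be determined from $C^{\wedge}(f)$: if $f, f'$ are barcodes with $C^{\wedge}(f) = C^{\wedge}(f')$, then $L(f^{\wedge p}) = L(f'^{\wedge p})$ for all integers $p\ge 1$.
   Context: A barcode is a finite formal sum $f = \sum_{i=1}^n x^{\alpha_i}y^{\ell_i}$ with $n\ge 0$, $\alpha_i \in \mathbb{R}$, $\ell_i \in \mathbb{R}_{>0}$ (a finite multiset of bars). Its $p$-th exterior power ($p\ge1$) is $f^{\wedge p} = \sum_{1\le i_1<\cdots<i_p\le n} x^{\alpha_{i_1}+\cdots+\alpha_{i_p}}y^{\min\{\ell_{i_1},\ldots,\ell_{i_p}\}}$ (zero if $p>n$). The lifespan series is $L(f) = \sum_{i=1}^n x^{\ell_i}$, the critical series is $C(f) = \sum_i x^{\alpha_i} - \sum_i x^{\alpha_i+\ell_i}$ (finite integer combinations of symbols $x^g$, $g\in\mathbb{R}$), and $C^{\wedge}(f) = \sum_{p\ge1} C(f^{\wedge p})z^p$ with $z$ an indeterminate. *)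

(* Defs.v *)
From HB Require Import structures.
From mathcomp Require Import all_boot all_order all_algebra.
From mathcomp Require Import reals.
Set Implicit Arguments. Unset Strict Implicit. Unset Printing Implicit Defensive.
Import Order.TTheory GRing.Theory Num.Theory.
Local Open Scope ring_scope.

(* A bar x^alpha y^ell is the pair (alpha, ell); a barcode is a finite
   multiset of bars, represented by a list (order irrelevant for all the
   counting notions below). *)
Definition barcode {R : realType} (f : seq (R * R)) : Prop :=
  all (fun b => 0 < b.2) f.

(* All size-p sub-multisets, given as subsequences chosen by position
   (i.e. all index sets i_1 < ... < i_p). *)
Fixpoint subseqs_of_size {T : Type} (p : nat) (s : seq T) : seq (seq T) :=
  match p, s with
  | 0%N, _ => [:: [::]]
  | p'.+1, [::] => [::]
  | p'.+1, x :: s' => map (cons x) (subseqs_of_size p' s') ++ subseqs_of_size p s'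
  end.

Definition sum_alpha {R : realType} (t : seq (R * R)) : R :=
  \sum_(b <- t) b.1.

Definition min_ell {R : realType} (t : seq (R * R)) : R :=
  match t with
  | [::] => 0
  | b :: t' => foldr Num.min b.2 [seq c.2 | c <- t']
  end.

Definition ext_pow {R : realType} (p : nat) (f : seq (R * R)) : seq (R * R) :=
  [seq (sum_alpha t, min_ell t) | t <- subseqs_of_size p f].

(* Lifespan series L(f) = sum_i x^{ell_i}: coefficient of x^g. *)
Definition lifespan {R : realType} (f : seq (R * R)) : R -> nat :=
  fun g => count (fun b => b.2 == g) f.

(* Critical series C(f) = sum_i x^{alpha_i} - sum_i x^{alpha_i+ell_i}:
   coefficient of x^g. *)
Definition critical {R : realType} (f : seq (R * R)) : R -> int :=
  fun g => (count (fun b => b.1 == g) f)%:Z - (count (fun b => b.1 + b.2 == g) f)%:Z.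

(* C^wedge(f) = sum_{p>=1} C(f^{/\p}) z^p : coefficient of z^p. *)
Definition critical_ext {R : realType} (f : seq (R * R)) : nat -> R -> int :=
  fun p => if (1 <= p)%N then critical (ext_pow p f) else fun _ => 0.

(* Main.v *)
Require Import Defs.
From HB Require Import structures.
From mathcomp Require Import all_boot all_order all_algebra.
From mathcomp Require Import reals.
From mathcomp Require Import zify lra.
From Stdlib Require Import FunctionalExtensionality.
Import Order.TTheory GRing.Theory Num.Theory.
Local Open Scope ring_scope.

Lemma subseqs_map (T U : Type) (h : T -> U) p s :
  subseqs_of_size p (map h s) = map (map h) (subseqs_of_size p s).
Proof.
elim: s p => [|x s IH] [|p] //=.
by rewrite !IH map_cat -!map_comp.
Qed.

Lemma all_subseqs (T : Type) (q : pred T) p s :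
  all q s -> all (all q) (subseqs_of_size p s).
Proof.
elim: s p => [|x s IH] [|p] //= /andP[qx qs].
rewrite all_cat all_map IH // andbT.
by apply: sub_all (IH p qs) => t /= ->; rewrite qx.
Qed.

Lemma size_subseqs (T : Type) p (s : seq T) :
  all (fun t => size t == p) (subseqs_of_size p s).
Proof.
elim: s p => [|x s IH] [|p] //=.
rewrite all_cat all_map IH andbT.
by apply: sub_all (IH p) => t /=.
Qed.

Lemma count_subseqs (T : Type) (q : pred T) p s :
  count (all q) (subseqs_of_size p s) = 'C(count q s, p).
Proof.
elim: s p => [|x s IH] [|p] //=; first by rewrite bin0.
rewrite count_cat count_map IH.
case qx: (q x) => /=.
  rewrite add1n binS addnC; congr (_ + _)%N.
  by rewrite -IH; apply: eq_count => t /=; rewrite qx.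
rewrite add0n -[X in _ = X]add0n; congr (_ + _)%N.
by rewrite -(count_pred0 (subseqs_of_size p s)); apply: eq_count => t /=; rewrite qx.
Qed.

Lemma count_sub (T : Type) (a b : pred T) (l : seq T) :
  (forall x, b x -> a x) ->
  (count (fun x => a x && ~~ b x) l + count b l)%N = count a l.
Proof.
move=> ba; elim: l => [|x l IH] //=.
case bx: (b x); first by rewrite (ba _ bx) /= add0n addnCA IH add1n.
by rewrite andbT /= add0n -IH addnA.
Qed.

Definition mn {R : realType} (t : seq R) : R :=
  match t with [::] => 0 | x :: r => foldr Num.min x r end.

Lemma le_mn (R : realType) (g x : R) r :
  (g <= foldr Num.min x r) = all (fun y => g <= y) (x :: r).
Proof.
elim: r => [|y r IH] /=; first by rewrite andbT.
by rewrite le_min IH /= andbCA.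
Qed.

Lemma lt_mn (R : realType) (g x : R) r :
  (g < foldr Num.min x r) = all (fun y => g < y) (x :: r).
Proof.
elim: r => [|y r IH] /=; first by rewrite andbT.
by rewrite lt_min IH /= andbCA.
Qed.

Lemma mn_eq (R : realType) (g : R) t : t != [::] ->
  (mn t == g) = all (fun y => g <= y) t && ~~ all (fun y => g < y) t.
Proof.
case: t => [|x r] // _; rewrite /mn.
by rewrite -le_mn -lt_mn eq_le -leNgt andbC.
Qed.

Lemma count_mn (R : realType) (g : R) p s :
  count (fun t => mn t == g) (subseqs_of_size p.+1 s) =
  ('C(count (fun y => (g <= y)%R) s, p.+1) - 'C(count (fun y => (g < y)%R) s, p.+1))%N.
Proof.
rewrite -!count_subseqs.
have H := count_sub _ (all (fun y => g <= y)) (all (fun y => g < y))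
  (subseqs_of_size p.+1 s) (fun t (H : all _ t) => sub_all (fun y => @ltW _ _ g y) H).
rewrite -H addnK; apply/eq_in_count => t /(allP (size_subseqs _ _ _)) /eqP st.
by rewrite mn_eq // -size_eq0 st.
Qed.

Definition F {R : realType} p (s : seq R) : R := \sum_(t <- subseqs_of_size p s) mn t.

Lemma size_subseqs2 (T : Type) p (s : seq T) :
  size (subseqs_of_size p s) = 'C(size s, p).
Proof.
rewrite -count_predT -(count_predT s) -count_subseqs.
by apply: eq_count => t; rewrite all_predT.
Qed.

Lemma F_small (R : realType) p (s : seq R) : (size s < p)%N -> F p s = 0.
Proof.
move=> lt; rewrite /F.
have /size0nil -> : size (subseqs_of_size p s) = 0%N by rewrite size_subseqs2 bin_small.
by rewrite big_nil.
Qed.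

Lemma mn_cons_min (R : realType) (x : R) t :
  all (fun y => x <= y) t -> mn (x :: t) = x.
Proof.
elim: t => [|y t IH] //= /andP[xy xt].
by have /= -> := IH xt; rewrite min_r.
Qed.

Lemma sum_cst (R : realType) (T : Type) (x : R) (l : seq T) :
  \sum_(t <- l) x = x *+ size l.
Proof.
by elim: l => [|? l IH]; rewrite ?big_nil ?big_cons ?IH ?mulrS.
Qed.

Lemma F_cons (R : realType) p (x : R) r : path <=%R x r ->
  F p.+1 (x :: r) = x *+ 'C(size r, p) + F p.+1 r.
Proof.
move=> px; rewrite /F /= big_cat big_map /=; congr (_ + _).
have H := all_subseqs _ _ p _ (order_path_min (@le_trans _ R) px).
rewrite big_seq (eq_bigr (fun _ => x)) -?big_seq ?sum_cst ?size_subseqs2 //.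
by move=> t /(allP H) /mn_cons_min.
Qed.

Lemma F_inj (R : realType) (s s' : seq R) :
  sorted <=%R s -> sorted <=%R s' -> size s = size s' ->
  (forall q, F q.+1 s = F q.+1 s') -> s = s'.
Proof.
elim: s s' => [|x r IH] [|x' r'] //= sx sx' /succn_inj sz EF.
have Ex : x = x'.
  have := EF (size r); rewrite !F_cons // !F_small -?sz // !binn !addr0.
  by rewrite !mulr1n.
subst x'; congr (_ :: _); apply: IH (path_sorted sx) (path_sorted sx') (sz) _ => q.
by have := EF q; rewrite !F_cons // sz => /addrI.
Qed.

Lemma sum_count (R : realType) (U l : seq R) : uniq U -> {subset l <= U} ->
  \sum_(x <- l) x = \sum_(g <- U) g *+ count (pred1 g) l.
Proof.
move=> uU; elim: l => [|x l IH] sub.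
  by rewrite big_nil big1 // => g _; rewrite mulr0n.
rewrite big_cons IH; last by move=> y yl; apply: sub; rewrite inE yl orbT.
rewrite [in RHS](eq_bigr (fun g => g *+ (x == g) + g *+ count (pred1 g) l)); last first.
  by move=> g _; rewrite /= mulrnDr.
rewrite big_split /=; congr (_ + _).
rewrite (bigD1_seq x) ?sub ?mem_head //= eqxx mulr1n big1 ?addr0 //.
by move=> g; rewrite eq_sym => /negbTE ->.
Qed.

Lemma F_perm (R : realType) q (s s' : seq R) : perm_eq s s' -> F q.+1 s = F q.+1 s'.
Proof.
move=> /permP pc.
set U := undup (map mn (subseqs_of_size q.+1 s) ++ map mn (subseqs_of_size q.+1 s')).
have uU : uniq U by apply: undup_uniq.
rewrite /F -(big_map mn xpredT id) -[in RHS](big_map mn xpredT id).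
rewrite (sum_count _ _ _ uU); last by move=> y yl; rewrite mem_undup mem_cat yl.
rewrite (sum_count _ _ (map mn (subseqs_of_size q.+1 s')) uU); last first.
  by move=> y yl; rewrite mem_undup mem_cat yl orbT.
apply: eq_bigr => g _; rewrite !count_map.
have E1 := count_mn _ g q s; have E2 := count_mn _ g q s'.
rewrite (eq_count (a2 := fun t => mn t == g)) // E1.
rewrite (eq_count (a2 := fun t => mn t == g)) // E2.
by rewrite !pc.
Qed.

Lemma crit_sum (R : realType) (h h' : seq (R * R)) :
  critical h = critical h' -> \sum_(b <- h) b.2 = \sum_(b <- h') b.2.
Proof.
move=> E.
set U := undup (map fst h ++ map (fun b => b.1 + b.2) h ++
                map fst h' ++ map (fun b => b.1 + b.2) h').
have uU : uniq U by apply: undup_uniq.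
have split (k : seq (R * R)) : \sum_(b <- k) b.2 = \sum_(b <- k) (b.1 + b.2) - \sum_(b <- k) b.1.
  by rewrite big_split /= addrAC subrr add0r.
rewrite !split -!(big_map fst xpredT id) -!(big_map (fun b => b.1 + b.2) xpredT id).
rewrite !(sum_count _ U) //; try by move=> y yl; rewrite mem_undup !mem_cat yl ?orbT.
set SDh := \sum_(g <- U) g *+ count _ (map (fun b => b.1 + b.2) h).
set SBh := \sum_(g <- U) g *+ count _ (map fst h).
set SDh' := \sum_(g <- U) g *+ count _ (map (fun b => b.1 + b.2) h').
set SBh' := \sum_(g <- U) g *+ count _ (map fst h').
suff : SDh + SBh' = SDh' + SBh by move=> H; lra.
rewrite /SDh /SBh /SDh' /SBh' -!big_split /=; apply: eq_bigr => g _.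
rewrite -!mulrnDr; congr (_ *+ _); rewrite !count_map.
have := congr1 (fun c => c g) E; rewrite /critical /=.
set a := count _ h; set b := count _ h; set c := count _ h'; set d := count _ h'.
move=> H.
have : (b + c)%N = (d + a)%N by lia.
by [].
Qed.

Lemma crit_nil (R : realType) (h : seq (R * R)) :
  barcode h -> critical h = critical [::] -> h = [::].
Proof.
case: h => [|b r] // bh /crit_sum; rewrite big_nil big_cons => E.
have /andP[b0 r0] : (0 < b.2) && all (fun c => 0 < c.2) r by exact: bh.
have : (0 : R) <= \sum_(c <- r) (c.2 : R).
  by rewrite big_seq; apply: sumr_ge0 => c /(allP r0) /ltW.
move=> H; move: E; have : (0 : R) < b.2 + \sum_(c <- r) (c.2 : R) by apply: (lt_le_trans b0); rewrite lerDl.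
by move=> + E; rewrite E ltxx.
Qed.

Lemma ext_sum (R : realType) p (f : seq (R * R)) :
  \sum_(b <- ext_pow p f) b.2 = F p (map snd f).
Proof.
rewrite /ext_pow big_map /F subseqs_map big_map.
by apply: eq_bigr => t _; case: t.
Qed.

Lemma ext_count (R : realType) p (f : seq (R * R)) g :
  lifespan (ext_pow p f) g = count (fun t => mn t == g) (subseqs_of_size p (map snd f)).
Proof.
rewrite /lifespan /ext_pow count_map subseqs_map count_map.
by apply: eq_count => t; case: t.
Qed.

Lemma size_ext (R : realType) p (f : seq (R * R)) :
  size (ext_pow p f) = 'C(size f, p).
Proof. by rewrite size_map size_subseqs2. Qed.

Lemma barcode_ext (R : realType) q (f : seq (R * R)) :
  barcode f -> barcode (ext_pow q.+1 f).
Proof.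
move=> bf; rewrite /barcode /ext_pow all_map.
have H1 := all_subseqs _ _ q.+1 _ bf.
have H2 := size_subseqs _ q.+1 f.
apply/allP => t tin /=.
move: (allP H1 t tin) (allP H2 t tin).
case: t {tin} => [|b t] //= /andP[b0 tp] _.
rewrite lt_mn /= b0 /=.
by rewrite all_map; apply: sub_all tp => c.
Qed.

Lemma le_size (R : realType) (f f' : seq (R * R)) :
  barcode f -> barcode f' ->
  (forall q, critical (ext_pow q.+1 f) = critical (ext_pow q.+1 f')) ->
  (size f <= size f')%N.
Proof.
move=> bf bf' E; case sf: (size f) => [|m] //.
case e: (ext_pow m.+1 f') => [|b r].
  have := crit_nil _ _ (barcode_ext _ m f bf); rewrite E e => /(_ erefl) /(congr1 size).
  by rewrite size_ext sf binn.
have := size_ext _ m.+1 f'; rewrite e /= => /esym/eqP.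
by move/eqP => H; rewrite -bin_gt0 H.
Qed.

Theorem proposition9 (R : realType) (f f' : seq (R * R)) :
  barcode f -> barcode f' ->
  critical_ext f = critical_ext f' ->
  forall p : nat, (1 <= p)%N -> lifespan (ext_pow p f) = lifespan (ext_pow p f').
Proof.
move=> bf bf' E p p1.
have Ec q : critical (ext_pow q.+1 f) = critical (ext_pow q.+1 f').
  by have := congr1 (fun c => c q.+1) E; rewrite /critical_ext.
have sz : size f = size f'.
  apply/eqP; rewrite eqn_leq le_size //= le_size // => q; exact/esym.
set s := sort <=%R (map snd f); set s' := sort <=%R (map snd f').
have ss : s = s'.
  apply: F_inj; rewrite ?sort_sorted //; try exact: le_total.
    by rewrite !size_sort !size_map.
  move=> q; rewrite /s /s' (F_perm _ q _ _ (permEl (perm_sort <=%R (map snd f)))).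
  rewrite (F_perm _ q _ _ (permEl (perm_sort <=%R (map snd f')))).
  by rewrite -!ext_sum; apply: crit_sum.
have pe : perm_eq (map snd f) (map snd f').
  rewrite -(perm_sort <=%R (map snd f)) -/s ss.
  exact: permEl (perm_sort _ _).
case: p p1 => [|q] // _.
apply: functional_extensionality => g.
by rewrite !ext_count !count_mn !(permP pe).
Qed.
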